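(* Let $n \ge 2$ be an integer and let $A_n \in \{0,1\}^{[2]^n \times [2]^{n-1}}$ be the binary single-deletion channel, i.e. $(A_n)_{x,y} = 1$ if and only if $y$ can be obtained from $x$ by deleting exactly one symbol. For a binary string $y$ let $r_y$ be the number of runs of $y$, $u_y$ the number of runs of length one in $y$, and $b_y$ the number of runs of length one that occur at the start or at the end of $y$. Define \[ f(r,u,b) = \frac{1}{r}\left(1 + \frac{\max(2u - b - 2,\,0)}{(r+2)(r+1)}\right)^{-1}. \] Then the vector $z \in \mathbb{R}^{[2]^{n-1}}$ with $z_y = f(r_y,u_y,b_y)$ is feasible for $\kappa^*(A_n)$, i.e. $z \ge \mathbf{0}$ and $A_n z \ge \mathbf{1}$ entrywise; consequently $\kappa^*(A_n) \le \sum_{y \in [2]^{n-1}} z_y$.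
   Context: $[2]=\{0,1\}$ and $[2]^m$ is the set of binary strings of length $m$. A run of a string is a maximal block of consecutive equal symbols. For a $0/1$ matrix $A \in \{0,1\}^{X\times Y}$ (a combinatorial channel with inputs $X$ and outputs $Y$), the minimum fractional output covering number is $\kappa^*(A) = \min\{\mathbf{1}^T z : z \in \mathbb{R}^Y,\ z \ge \mathbf{0},\ Az \ge \mathbf{1}\}$, where inequalities are entrywise and $\mathbf{1},\mathbf{0}$ denote all-ones and all-zeros vectors. *)

(* Defs.v *)
From mathcomp Require Import all_boot all_order all_algebra.
Set Implicit Arguments. Unset Strict Implicit. Unset Printing Implicit Defensive.
Import Order.TTheory GRing.Theory Num.Theory.
Local Open Scope ring_scope.

Fixpoint run_lengths (s : seq bool) : seq nat :=
  match s with
  | [::] => [::]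
  | a :: t =>
      match run_lengths t with
      | k :: ks => if t is b :: _ then (if a == b then k.+1 :: ks else 1%N :: k :: ks)
                   else [:: 1%N]
      | [::] => [:: 1%N]
      end
  end.

Definition nruns (s : seq bool) : nat := size (run_lengths s).
Definition nsingle (s : seq bool) : nat := count (pred1 1%N) (run_lengths s).
(* b_y : number of runs of length one at the start or at the end of y
   (each run counted once; a single run that is both first and last counts once) *)
Definition nbound (s : seq bool) : nat :=
  let L := run_lengths s in
  match L with
  | [::] => 0%N
  | [:: k] => (k == 1%N)
  | k :: _ => (k == 1%N) + (last 0%N L == 1%N)
  end.

Definition del_at (i : nat) (s : seq bool) : seq bool := take i s ++ drop i.+1 s.

Definition del_channel (n : nat) (x : n.-tuple bool) (y : n.-1.-tuple bool) : bool :=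
  [exists i : 'I_n, del_at i x == val y].

Definition ffun_z {R : realFieldType} (r u b : nat) : R :=
  (r%:R)^-1 *
  (1 + (Num.max (2 * u%:R - b%:R - 2) 0) / ((r%:R + 2) * (r%:R + 1)))^-1.

Definition frac_cover_feasible {R : realFieldType} (X Y : finType)
  (A : X -> Y -> bool) (z : Y -> R) : Prop :=
  (forall y, 0 <= z y) /\ (forall x, 1 <= \sum_(y | A x y) z y).

Definition kappa_star_le {R : realFieldType} (X Y : finType)
  (A : X -> Y -> bool) (c : R) : Prop :=
  exists z : Y -> R, frac_cover_feasible A z /\ \sum_y z y <= c.

(* Main.v *)
Require Import Defs.
From mathcomp Require Import all_boot all_order all_algebra.
From mathcomp Require Import zify.
Import Order.TTheory GRing.Theory Num.Theory.

Fixpoint expand (b : bool) (L : seq nat) : seq bool :=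
  if L is k :: L' then nseq k b ++ expand (~~ b) L' else [::].

Definition pos (L : seq nat) := all (fun k => 0 < k) L.

Lemma size_expand b L : size (expand b L) = sumn L.
Proof. by elim: L b => //= k L IH b; rewrite size_cat size_nseq IH. Qed.

Lemma expand_cat b l1 l2 :
  expand b (l1 ++ l2) = expand b l1 ++ expand (b (+) odd (size l1)) l2.
Proof.
elim: l1 b => [|k l1 IH] b /=; first by rewrite addbF.
by rewrite IH catA addNb addbN.
Qed.

Lemma RL_cons a c t : run_lengths (a :: c :: t) =
  match run_lengths (c :: t) with
  | [::] => [:: 1]
  | k :: ks => if a == c then k.+1 :: ks else [:: 1, k & ks] end.
Proof. by []. Qed.

Lemma RL_expand L : pos L -> forall b, run_lengths (expand b L) = L.
Proof.
elim: L => // k L IH /= /andP[kpos pL] b.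
case: k kpos => // k _.
elim: k => [|k IHk].
- rewrite /= IH //.
  case: L pL IH => //= k' L'' /andP[k'pos _] _.
  case: k' k'pos => // k' _ /=.
  by case: b.
- by rewrite (_ : nseq k.+2 b ++ _ = b :: (nseq k.+1 b ++ expand (~~b) L)) // RL_cons IHk eqxx.
Qed.

Lemma RL_pos s : pos (run_lengths s).
Proof.
elim: s => //= a t IH.
case E: (run_lengths t) IH => [|k ks] //=.
case: t E => //= c t' _ /andP[kp ksp].
by case: (a == c) => /=; rewrite ?kp ?ksp.
Qed.

Lemma expand_RL s : s = expand (head true s) (run_lengths s).
Proof.
elim: s => // a t IH.
case: t IH => [|c t'] IH; first by [].
rewrite RL_cons; move: IH (RL_pos (c :: t')).
rewrite [head true (c :: t')]/= [head true (a :: _)]/=.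
case E: (run_lengths (c :: t')) => [|k ks] IH //.
case: k E IH => [|k] E IH /andP[// _ _].
case: eqP => [eac|neq].
  by subst a; move: IH => /= [->].
have nac : ~~ a = c by case: a c neq {E IH} => [] [].
by move: IH => /= [->]; rewrite nac.
Qed.

Lemma del_at_cat (s1 : seq bool) x s2 : del_at (size s1) (s1 ++ x :: s2) = s1 ++ s2.
Proof.
by rewrite /del_at take_size_cat // drop_cat ltnNge leqnSn /= subSnn drop1.
Qed.

Lemma del_expand b l1 k l2 :
  del_at (sumn l1) (expand b (l1 ++ k.+1 :: l2)) =
  expand b l1 ++ nseq k (b (+) odd (size l1)) ++ expand (~~ (b (+) odd (size l1))) l2.
Proof. by rewrite expand_cat -(size_expand b l1) [expand _ (_ :: _)]/= del_at_cat. Qed.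

Lemma pos_cat l1 l2 : pos (l1 ++ l2) = pos l1 && pos l2.
Proof. by rewrite /pos all_cat. Qed.

Lemma RL_del_big b l1 k l2 : pos (l1 ++ k.+2 :: l2) ->
  run_lengths (del_at (sumn l1) (expand b (l1 ++ k.+2 :: l2))) = l1 ++ k.+1 :: l2.
Proof.
move=> p; rewrite del_expand.
rewrite (_ : nseq k.+1 _ ++ _ = expand (b (+) odd (size l1)) (k.+1 :: l2)) //.
rewrite -expand_cat RL_expand //.
by move: p; rewrite !pos_cat.
Qed.

Lemma RL_del_first b l2 : pos l2 ->
  run_lengths (del_at (sumn [::]) (expand b ([::] ++ 1 :: l2))) = l2.
Proof. by move=> p; rewrite /del_at /= drop0 RL_expand. Qed.

Lemma RL_del_last b l1 : pos l1 ->
  run_lengths (del_at (sumn l1) (expand b (l1 ++ [:: 1]))) = l1.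
Proof. by move=> p; rewrite del_expand /= cats0 RL_expand. Qed.

Lemma RL_del_mid b l1 a d l2 : pos l1 -> 0 < a -> 0 < d -> pos l2 ->
  run_lengths (del_at (sumn (rcons l1 a)) (expand b (rcons l1 a ++ 1 :: d :: l2)))
  = l1 ++ (a + d) :: l2.
Proof.
move=> p1 pa pd p2; rewrite del_expand /=.
rewrite -cats1 expand_cat size_cat addn1 /= addbN negbK cats0 -catA [nseq a _ ++ _]catA -nseqD.
rewrite (_ : nseq (a + d) _ ++ _ = expand (b (+) odd (size l1)) ((a + d) :: l2)) //.
rewrite -expand_cat RL_expand //.
by rewrite pos_cat p1 /= p2 addn_gt0 pa.
Qed.

Definition c1 (L : seq nat) := count (pred1 1) L.
Definition nbL (L : seq nat) : nat :=
  match L with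
  | [::] => 0
  | [:: k] => k == 1
  | k :: _ :: _ => (k == 1) + (last 0 L == 1)
  end.

Lemma nbound_RL s : nbound s = nbL (run_lengths s).
Proof. by rewrite /nbound; case: run_lengths => [|k [|k' t]]. Qed.

Lemma nbL_le2 L : nbL L <= 2.
Proof. by case: L => [|k [|k' t]] //=; [case: (k == 1) | case: (k == 1); case: (_ == 1)]. Qed.

Lemma nbL_le_c1 L : nbL L <= c1 L.
Proof.
case: L => [|k [|k' t]] //=; first by rewrite addn0.
rewrite leq_add2l; case: eqP => //= e.
rewrite (_ : (k' == 1) + c1 t = c1 (k' :: t)) // /c1 -has_count.
by apply/hasP; exists (last k' t); [exact: mem_last | rewrite /= e].
Qed.

Lemma nbL_cons2 k k' t : nbL [:: k, k' & t] = (k == 1) + (last k' t == 1).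
Proof. by []. Qed.

Lemma nbL_cons a t : nbL (a :: t) = (a == 1) + ((t != [::]) && (last a t == 1)).
Proof. by case: t => [|x t] //=; rewrite addn0. Qed.

Lemma nbL_big l1 k l2 : nbL (l1 ++ k.+2 :: l2) <= nbL (l1 ++ k.+1 :: l2).
Proof.
have lastle c c' : c != 1 -> (last c l2 == 1) <= (last c' l2 == 1).
  by case: l2 => //= /negbTE ->.
case: l1 => [|a l1].
  rewrite !cat0s !nbL_cons /= leq_add //; case: l2 {lastle} => //= x l2.
rewrite cat_cons !nbL_cons leq_add2l.
have ne c : (l1 ++ c :: l2 != [::]) by case: l1.
by rewrite !ne /= !last_cat /=; apply: lastle.
Qed.

Lemma c1_big l1 k l2 : c1 (l1 ++ k.+1 :: l2) <= (c1 (l1 ++ k.+2 :: l2)).+1.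
Proof. rewrite /c1 !count_cat /=; case: (k == 0) => /=; lia. Qed.

Lemma c1_mid l1 a d l2 : 0 < a -> 0 < d ->
  (c1 (l1 ++ (a + d) :: l2)).+1 <= c1 (rcons l1 a ++ 1 :: d :: l2).
Proof.
move=> pa pd; rewrite /c1 -cats1 -catA !count_cat /=.
have -> : (a + d == 1) = false by apply/eqP; lia.
case: (a == 1); case: (d == 1) => /=; lia.
Qed.

Lemma drop_nil_iff (L : seq nat) j : j < size L ->
  (drop j.+1 L == [::]) = (j == (size L).-1).
Proof.
move=> hj; rewrite -size_eq0 size_drop.
case: (size L) hj => // m hm; rewrite /= subSS.
by apply/idP/idP => /eqnP h; apply/eqnP; lia.
Qed.

Lemma nth_del (s : seq bool) p k : p < size s ->
  nth false (del_at p s) k = nth false s (if k < p then k else k.+1).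
Proof.
move=> ps; rewrite /del_at nth_cat size_take ps.
case: ifP => kp; first by rewrite nth_take.
rewrite nth_drop; congr nth; move: kp => /negbT; rewrite -leqNgt => kp; lia.
Qed.

Lemma nth_cat_add (s1 s2 : seq bool) k : nth false (s1 ++ s2) (size s1 + k) = nth false s2 k.
Proof. by rewrite nth_cat ltnNge leq_addr /= addKn. Qed.

Lemma sumn_take_mono L i j : i <= j -> sumn (take i L) <= sumn (take j L).
Proof. by move=> ij; rewrite -(subnKC ij) takeD sumn_cat leq_addr. Qed.

Lemma expand_boundary b L i : pos L -> i.+1 < size L ->
  nth false (expand b L) (sumn (take i.+1 L)).-1 !=
  nth false (expand b L) (sumn (take i.+1 L)).
Proof.
move=> pL iL.
have iL' : i < size L by lia.
have eL : L = take i L ++ nth 0 L i :: nth 0 L i.+1 :: drop i.+2 L.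
  by rewrite -drop_nth // -drop_nth // cat_take_drop.
have ai : 0 < nth 0 L i by apply: (allP pL); rewrite mem_nth.
have di : 0 < nth 0 L i.+1 by apply: (allP pL); rewrite mem_nth.
rewrite (take_nth 0 iL') sumn_rcons.
move: (take i L) (nth 0 L i) (nth 0 L i.+1) (drop i.+2 L) eL ai di => l1 a d l2 -> ai di.
rewrite expand_cat /=.
set c := b (+) odd (size l1).
have -> : (sumn l1 + a).-1 = size (expand b l1) + a.-1 by rewrite size_expand; lia.
have -> : sumn l1 + a = size (expand b l1) + a by rewrite size_expand.
rewrite !nth_cat_add !nth_cat size_nseq ltnn subnn nth_nseq.
have -> : (a.-1 < a) = true by lia.
rewrite size_nseq di nth_nseq di.
by case: c.
Qed.

Lemma del_neq b L i j : pos L -> i < j -> j < size L ->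
  del_at (sumn (take i L)) (expand b L) != del_at (sumn (take j L)) (expand b L).
Proof.
move=> pL ij jL.
set s := expand b L.
have ss : size s = sumn L by rewrite size_expand.
have iL : i < size L by lia.
have ai : 0 < nth 0 L i by apply: (allP pL); rewrite mem_nth.
have m_def : sumn (take i.+1 L) = sumn (take i L) + nth 0 L i by rewrite (take_nth 0 iL) sumn_rcons.
have mq : sumn (take i.+1 L) <= sumn (take j L) by apply: sumn_take_mono.
have qn : sumn (take j L) < sumn L.
  have eL : L = take j L ++ nth 0 L j :: drop j.+1 L by rewrite -drop_nth // cat_take_drop.
  have aj : 0 < nth 0 L j by apply: (allP pL); rewrite mem_nth.
  by rewrite {2}eL sumn_cat /=; lia.
have bd := expand_boundary b L i pL (leq_ltn_trans ij jL).
apply/eqP => E.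
have := congr1 (fun t => nth false t (sumn (take i.+1 L)).-1) E.
rewrite !nth_del ?ss; try lia.
have -> : ((sumn (take i.+1 L)).-1 < sumn (take i L)) = false by lia.
have -> : ((sumn (take i.+1 L)).-1 < sumn (take j L)) = true by lia.
have -> : (sumn (take i.+1 L)).-1.+1 = sumn (take i.+1 L) by lia.
by move=> e; move: bd; rewrite e eqxx.
Qed.

Lemma size_del (s : seq bool) p : p < size s -> size (del_at p s) = (size s).-1.
Proof. by move=> ps; rewrite /del_at size_cat size_take size_drop ps; lia. Qed.

Lemma sumn_take_lt L i : pos L -> i < size L -> sumn (take i L) < sumn L.
Proof.
move=> pL iL.
have eL : L = take i L ++ nth 0 L i :: drop i.+1 L by rewrite -drop_nth // cat_take_drop.
have aj : 0 < nth 0 L i by apply: (allP pL); rewrite mem_nth.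
by rewrite {2}eL sumn_cat /=; lia.
Qed.

Lemma cnt1 L : (\sum_(i < size L) ((nth 0 L i == 1) : nat))%N = c1 L.
Proof.
rewrite /c1 -sum1_count (big_nth 0) big_mkord big_mkcond /=.
rewrite [RHS]big_mkcond; apply: eq_bigr => i _; by case: (_ == 1).
Qed.

Lemma cntb L : (\sum_(i < size L)
   (((nth 0 L i == 1) && ((nat_of_ord i == 0%N) || (nat_of_ord i == (size L).-1))) : nat))%N = nbL L.
Proof.
case: L => [|k [|k' t]]; first by rewrite big_ord0.
  by rewrite big_ord1 /= andbT.
rewrite [size _]/= big_ord_recl big_ord_recr /= big1 ?add0n.
  by rewrite andbT (nth_last 0 (k' :: t)) /bump /= add1n eqxx andbT.
move=> i _; rewrite /bump add0n /= add1n eqSS.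
have := ltn_ord i.
by rewrite (ltn_eqF (ltn_ord i)) andbF.
Qed.

Lemma small_L L : (2 <= sumn L)%N -> [/\ (1 <= size L)%N,
  ((size L <= 2)%N -> c1 L = nbL L) & (size L = 1%N -> c1 L = 0%N)].
Proof.
case: L => [|k [|k' [|k'' t]]] //= s2; split => //.
- by rewrite addn0.
- by move=> _; rewrite addn0; case: k s2 => [|[|k]].
- by rewrite addn0.
Qed.

Local Open Scope ring_scope.
From mathcomp Require Import ring lra.

Section Real.
Variable R : realFieldType.

Definition ZL (L : seq nat) : R := ffun_z (size L) (c1 L) (nbL L).

Definition lbF (r : nat) (G : R) : R :=
  (r%:R)^-1 * (1 - Num.max G 0 / ((r%:R + 2) * (r%:R + 1))).

Lemma ffun_lb (r u b : nat) (G : R) :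
  2 * u%:R - b%:R - 2 <= G -> lbF r G <= ffun_z r u b.
Proof.
move=> hG; rewrite /lbF /ffun_z.
apply: ler_wpM2l; first by rewrite invr_ge0 ler0n.
set D := ((r%:R + 2) * (r%:R + 1)).
have Dp : 0 < D by rewrite /D mulr_gt0 // ltr_wpDl // ler0n.
set M := Num.max (2 * u%:R - b%:R - 2) 0.
set M' := Num.max G 0.
have M0 : 0 <= M by rewrite /M le_max lexx orbT.
have MM : M <= M' by rewrite /M /M' ge_max !le_max lexx hG /= orbT.
have c0 : 0 <= M / D by rewrite divr_ge0 // ltW.
have cc : M / D <= M' / D by rewrite ler_pM2r // invr_gt0.
apply: (@le_trans _ _ (1 - M / D)); first by lra.
rewrite -[(1 + _)^-1]div1r ler_pdivlMr; last by lra.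
have : 0 <= (M / D) * (M / D) by rewrite mulr_ge0.
set c := M / D; move=> h.
have -> : (1 - c) * (1 + c) = 1 - c * c by ring.
lra.
Qed.

Definition TB (r u bb : nat) (one first last : bool) : R :=
  let S := 2 * u%:R - bb%:R in
  if one then (if first || last then lbF r.-1 (S - 1) else lbF (r - 2) (S - 2))
  else lbF r S.

Lemma term_lb b0 L l1 k l2 : L = l1 ++ k :: l2 -> pos L -> (2 <= sumn L)%N ->
  TB (size L) (c1 L) (nbL L) (k == 1%N) (l1 == [::]) (l2 == [::])
  <= ZL (run_lengths (del_at (sumn l1) (expand b0 L))).
Proof.
move=> -> pL sL.
have bb2 := nbL_le2 (l1 ++ k :: l2).
move: pL; rewrite pos_cat /= => /andP[p1 /andP[pk p2]].
case: k sL bb2 pk => [|[|j]] sL bb2 pk //.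
-
  rewrite /TB /=.
  case: l1 sL bb2 p1 => [|a1 l1] sL bb2 p1; case: l2 sL bb2 p2 => [|d l2] sL bb2 p2.
  + by [].
  + rewrite /ZL RL_del_first //; apply: ffun_lb.
    rewrite cat0s (_ : c1 [:: 1%N, d & l2] = (c1 (d :: l2)).+1) // -natr1.
    move: bb2; rewrite cat0s -(ler_nat R) => h1.
    have h2 : (0:R) <= (nbL (d :: l2))%:R by rewrite ler0n.
    lra.
  + rewrite eqxx orbT /ZL RL_del_last //.
    have -> : (size ((a1 :: l1) ++ [:: 1%N])).-1 = size (a1 :: l1)
      by rewrite size_cat addn1.
    apply: ffun_lb.
    rewrite (_ : c1 ((a1 :: l1) ++ [:: 1%N]) = (c1 (a1 :: l1)).+1);
      last by rewrite /c1 count_cat /= addn0 addn1.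
    rewrite -natr1.
    move: bb2; rewrite -(ler_nat R) => h1.
    have h2 : (0:R) <= (nbL (a1 :: l1))%:R by rewrite ler0n.
    lra.
  + rewrite (_ : (a1 :: l1 == [::]) || (d :: l2 == [::]) = false) //.
    move Hl: (a1 :: l1) p1 sL bb2 => l1x p1 sL bb2.
    case/lastP: l1x Hl p1 sL bb2 => [//|l1' a] _ p1 sL bb2.
    move: p1; rewrite -cats1 pos_cat /= andbT => /andP[p1' pa].
    move: p2; rewrite /= => /andP[pd p2'].
    rewrite cats1 /ZL RL_del_mid //.
    have -> : (size (rcons l1' a ++ [:: 1%N, d & l2]) - 2)%N = size (l1' ++ (a + d) :: l2).
      by rewrite !size_cat size_rcons /=; lia.
    apply: ffun_lb.
    have hu : (c1 (l1' ++ (a + d) :: l2))%:R + 1 <= (c1 (rcons l1' a ++ [:: 1%N, d & l2]))%:R :> R.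
      by rewrite natr1 ler_nat c1_mid.
    move: bb2; rewrite -(ler_nat R) => h1.
    have h2 : (0:R) <= (nbL (l1' ++ (a + d) :: l2))%:R by rewrite ler0n.
    lra.
- rewrite /TB /= /ZL RL_del_big; last by rewrite pos_cat p1 /= p2.
  have -> : size (l1 ++ j.+1 :: l2) = size (l1 ++ j.+2 :: l2) by rewrite !size_cat.
  apply: ffun_lb.
  have hu : (c1 (l1 ++ j.+1 :: l2))%:R <= (c1 (l1 ++ j.+2 :: l2))%:R + 1 :> R.
    by rewrite natr1 ler_nat c1_big.
  have hb : (nbL (l1 ++ j.+2 :: l2))%:R <= (nbL (l1 ++ j.+1 :: l2))%:R :> R.
    by rewrite ler_nat nbL_big.
  lra.
Qed.

Lemma keyR (x k b : R) : 3 <= x -> 0 <= k -> 0 <= b -> k + b <= x ->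
  1 <= (x - k - b) * (x^-1 * (1 - (2 * k + b) / ((x + 2) * (x + 1))))
     + k * ((x - 2)^-1 * (1 - (2 * k + b - 2) / ((x - 2 + 2) * (x - 2 + 1))))
     + b * ((x - 1)^-1 * (1 - (2 * k + b - 1) / ((x - 1 + 2) * (x - 1 + 1)))).
Proof.
move=> x3 k0 b0 kb.
rewrite -subr_ge0.
set q := x - k - b.
set d1 := (x - 2) * (x - 1).
set d2 := (x - 1) * (x + 1).
set d3 := (x + 1) * (x + 2).
have q0 : 0 <= q by rewrite /q; lra.
have d10 : 0 < d1 by rewrite /d1 mulr_gt0 //; lra.
have d20 : 0 < d2 by rewrite /d2 mulr_gt0 //; lra.
have d30 : 0 < d3 by rewrite /d3 mulr_gt0 //; lra.
have -> : (q * (x^-1 * (1 - (2 * k + b) / ((x + 2) * (x + 1))))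
     + k * ((x - 2)^-1 * (1 - (2 * k + b - 2) / ((x - 2 + 2) * (x - 2 + 1))))
     + b * ((x - 1)^-1 * (1 - (2 * k + b - 1) / ((x - 1 + 2) * (x - 1 + 1))))) - 1
   = (2 * k * q * d2 * (6 * x) + b * (q * d1 * (3 * x + 3) + k * d3 * (3 * x - 3) + 2 * d1 * d3))
     / (x * d1 * d2 * d3).
  rewrite /q /d1 /d2 /d3; field.
  by apply/and5P; split; rewrite gt_eqF //; lra.
apply: divr_ge0; last by apply: ltW; rewrite !mulr_gt0 //; lra.
apply: addr_ge0; first by rewrite !mulr_ge0 //; lra.
apply: mulr_ge0 => //.
rewrite !addr_ge0 // !mulr_ge0 //; lra.
Qed.

Lemma keyR0 (x b : R) : 2 <= x -> 0 <= b -> b <= x ->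
  1 <= (x - b) * (x^-1 * (1 - b / ((x + 2) * (x + 1))))
     + b * ((x - 1)^-1 * (1 - (b - 1) / ((x - 1 + 2) * (x - 1 + 1)))).
Proof.
move=> x2 b0 bx.
rewrite -subr_ge0.
set q := x - b.
set d2 := (x - 1) * (x + 1).
set d3 := (x + 1) * (x + 2).
have q0 : 0 <= q by rewrite /q; lra.
have d20 : 0 < d2 by rewrite /d2 mulr_gt0 //; lra.
have d30 : 0 < d3 by rewrite /d3 mulr_gt0 //; lra.
have -> : (q * (x^-1 * (1 - b / ((x + 2) * (x + 1))))
     + b * ((x - 1)^-1 * (1 - (b - 1) / ((x - 1 + 2) * (x - 1 + 1))))) - 1
   = (b * (q * (3 * x + 3) + 2 * d3)) / (x * d2 * d3).
  rewrite /q /d2 /d3; field.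
  by apply/and4P; split; rewrite gt_eqF //; lra.
apply: divr_ge0; last by apply: ltW; rewrite !mulr_gt0 //; lra.
apply: mulr_ge0 => //.
rewrite !addr_ge0 // !mulr_ge0 //; lra.
Qed.

Lemma final_ineq (r u bb : nat) : (1 <= r)%N -> (bb <= u)%N -> (u <= r)%N ->
  (bb <= 2)%N -> ((r <= 2)%N -> u = bb) -> (r = 1%N -> u = 0%N) ->
  forall S : R, S = 2 * u%:R - bb%:R ->
  1 <= r%:R * lbF r S + u%:R * (lbF (r - 2) (S - 2) - lbF r S)
       + bb%:R * (lbF r.-1 (S - 1) - lbF (r - 2) (S - 2)).
Proof.
move=> r1 bu ur b2 r2 r1u S ->.
case: (ltngtP r 1%N) r1 => // [r_gt1 _ | r_eq1 _]; last first.
  have u0 := r1u r_eq1; rewrite u0 in bu r2 *.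
  have bb0 : bb = 0%N by lia.
  rewrite r_eq1 bb0 /lbF /=.
  have -> : Num.max (2 * (0%N)%:R - (0%N)%:R) 0 = 0 :> R by rewrite mulr0n mulr0 subr0 maxxx.
  by rewrite mul0r subr0 mulr1 !mul0r !addr0 invr1 mulr1.
have [k ek] : exists k, u = (k + bb)%N by exists (u - bb)%N; lia.
rewrite ek in r2 ur *.
have x2 : (2:R) <= r%:R by rewrite (ler_nat R 2 r).
have er1 : (r.-1)%:R = r%:R - 1 :> R by rewrite -subn1 natrB //; lia.
have eS : 2 * (k + bb)%:R - bb%:R = 2 * k%:R + bb%:R :> R by rewrite natrD; ring.
rewrite eS.
clear S; set S := 2 * k%:R + bb%:R.
have S0 : 0 <= S by rewrite /S addr_ge0 // mulr_ge0 // ler0n.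
have -> : r%:R * lbF r S + (k + bb)%:R * (lbF (r - 2) (S - 2) - lbF r S)
    + bb%:R * (lbF r.-1 (S - 1) - lbF (r - 2) (S - 2))
  = (r%:R - k%:R - bb%:R) * lbF r S + k%:R * lbF (r - 2) (S - 2) + bb%:R * lbF r.-1 (S - 1).
  by rewrite natrD; ring.
have e1 : lbF r S = (r%:R)^-1 * (1 - S / ((r%:R + 2) * (r%:R + 1))) by rewrite /lbF max_l.
have e3 : bb%:R * lbF r.-1 (S - 1) =
    bb%:R * ((r%:R - 1)^-1 * (1 - (S - 1) / ((r%:R - 1 + 2) * (r%:R - 1 + 1)))).
  case: (posnP bb) => [->|bpos]; first by rewrite !mul0r.
  rewrite /lbF er1 max_l //; rewrite /S.
  have : (1:R) <= bb%:R by rewrite (ler_nat R 1).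
  have := ler0n R k; lra.
rewrite e1 e3.
case: (posnP k) => [k0|kpos].
  rewrite /S k0 mulr0n mul0r addr0 subr0 mulr0 add0r.
  by apply: keyR0; rewrite // ?ler0n // (ler_nat R bb r); lia.
have r3 : (2 < r)%N by case: (leqP r 2) => // /r2; lia.
have er2 : (r - 2)%:R = r%:R - 2 :> R by rewrite natrB //; lia.
have e2 : lbF (r - 2) (S - 2) =
    (r%:R - 2)^-1 * (1 - (S - 2) / ((r%:R - 2 + 2) * (r%:R - 2 + 1))).
  rewrite /lbF er2 max_l //; rewrite /S.
  have : (1:R) <= k%:R by rewrite (ler_nat R 1).
  have := ler0n R bb; lra.
rewrite e2 /S.
apply: keyR; rewrite ?ler0n //.
- by rewrite (ler_nat R 3 r).
- by rewrite -natrD (ler_nat R); lia.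
Qed.

Lemma sum_TB L : pos L -> (2 <= sumn L)%N ->
  1 <= \sum_(i < size L) TB (size L) (c1 L) (nbL L) (nth 0 L i == 1%N)
         (nat_of_ord i == 0%N) (nat_of_ord i == (size L).-1).
Proof.
move=> pL sL; have [r1 sm1 sm2] := small_L L sL.
have bu := nbL_le_c1 L; have ur := count_size (pred1 1%N) L; have b2 := nbL_le2 L.
pose S : R := 2 * (c1 L)%:R - (nbL L)%:R.
rewrite (eq_bigr (fun i : 'I_(size L) => lbF (size L) S
   + ((nth 0 L i == 1%N) : nat)%:R * (lbF (size L - 2) (S - 2) - lbF (size L) S)
   + (((nth 0 L i == 1%N) && ((nat_of_ord i == 0%N) || (nat_of_ord i == (size L).-1))) : nat)%:R
      * (lbF (size L).-1 (S - 1) - lbF (size L - 2) (S - 2)))); last first.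
  move=> i _; rewrite /TB -/S.
  by case: (_ == 1%N); case: (_ || _) => /=; rewrite ?mulr1n ?mulr0n; ring.
rewrite !big_split /= sumr_const card_ord -!big_distrl /= -!natr_sum cnt1 cntb.
rewrite -[lbF _ S *+ _]mulr_natl.
by apply: final_ineq.
Qed.

Lemma main_list b0 L : pos L -> (2 <= sumn L)%N ->
  1 <= \sum_(i < size L) ZL (run_lengths (del_at (sumn (take i L)) (expand b0 L))).
Proof.
move=> pL sL; apply: (le_trans (sum_TB L pL sL)); apply: ler_sum => i _.
have iL := ltn_ord i.
have eL : L = take i L ++ nth 0 L i :: drop i.+1 L by rewrite -drop_nth // cat_take_drop.
have e1 : (take i L == [::]) = (nat_of_ord i == 0%N)
  by rewrite -size_eq0 size_take iL.
have e2 : (drop i.+1 L == [::]) = (nat_of_ord i == (size L).-1).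
  exact: drop_nil_iff.
by rewrite -e1 -e2; apply: term_lb.
Qed.

Lemma z_ge0 (r u b : nat) : 0 <= ffun_z (R := R) r u b.
Proof.
rewrite /ffun_z mulr_ge0 // ?invr_ge0 ?ler0n // addr_ge0 // divr_ge0 //.
  by rewrite le_max lexx orbT.
by rewrite mulr_ge0 // addr_ge0 // ler0n.
Qed.

Lemma sum_sub (T : finType) (A : {set T}) (P : pred T) (F : T -> R) :
  (forall y, y \in A -> P y) -> (forall y, 0 <= F y) ->
  \sum_(y in A) F y <= \sum_(y | P y) F y.
Proof.
move=> sub F0.
rewrite [X in _ <= X](bigID (fun y => y \in A)) /=.
have -> : \sum_(i | P i && (i \in A)) F i = \sum_(i in A) F i.
  apply: eq_bigl => y; case: (boolP (y \in A)) => h; first by rewrite andbT sub.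
  by rewrite andbF.
by rewrite lerDl sumr_ge0.
Qed.

End Real.

Theorem theorem1 (R : realFieldType) (n : nat) (hn : (2 <= n)%N) :
  let z := fun y : n.-1.-tuple bool =>
             ffun_z (R := R) (nruns y) (nsingle y) (nbound y) in
  frac_cover_feasible (@del_channel n) z /\
  kappa_star_le (@del_channel n) (\sum_y z y).
Proof.
move=> z.
have z0 : forall y, 0 <= z y by move=> y; exact: z_ge0.
have feas : frac_cover_feasible (@del_channel n) z.
  split => // x.
  pose s : seq bool := x.
  have sz : size s = n by rewrite size_tuple.
  pose L := run_lengths s; pose b0 := head true s.
  have es : s = expand b0 L := expand_RL s.
  have pL : pos L := RL_pos s.
  have sL : sumn L = n by rewrite -(size_expand b0) -es.
  have pn : forall i : 'I_(size L), (sumn (take i L) < n)%N.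
    by move=> i; rewrite -sL sumn_take_lt.
  pose Y (i : 'I_(size L)) : n.-1.-tuple bool :=
    insubd (nseq_tuple n.-1 false) (del_at (sumn (take i L)) s).
  have YE : forall i, (Y i : seq bool) = del_at (sumn (take i L)) s.
    move=> i; apply: insubdK; rewrite /= -topredE /= size_del sz //.
  have Yinj : injective Y.
    move=> i j e.
    have := congr1 (fun t : n.-1.-tuple bool => (t : seq bool)) e.
    rewrite /= !YE es => e'.
    case: (ltngtP i j) => [ij|ji|]; last by move/val_inj.
    - by move: (del_neq b0 L i j pL ij (ltn_ord j)); rewrite e' eqxx.
    - by move: (del_neq b0 L j i pL ji (ltn_ord i)); rewrite e' eqxx.
  apply: le_trans (@main_list R b0 L pL _) _; first by rewrite sL.
  have -> : \sum_(i < size L) ZL R (run_lengths (del_at (sumn (take i L)) (expand b0 L)))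
      = \sum_(i < size L) z (Y i).
    by apply: eq_bigr => i _; rewrite /z /ZL /nruns /nsingle nbound_RL YE es.
  rewrite -(big_imset _ (in2W Yinj)) /=.
  apply: sum_sub => // y /imsetP [i _ ->].
  apply/existsP; exists (Ordinal (pn i)).
  by rewrite /= YE.
split => //; exists z; split => //.
Qed.
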